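(* Let $D$ be a transportability diagram and let $G$ be the subgraph obtained by removing all transportability nodes $T$ from $D$. Let $X,Y,Z$ be disjoint sets of vertices of $D$ containing no transportability nodes. Then $X$ and $Y$ are d-separated by $Z\cup T'$ in $D$ for every $T'\subseteq T$ if and only if $X$ and $Y$ are d-separated by $Z$ in $G$.
   Context: A (semi-Markovian) graph $G=(V,E)$ has directed edges forming an acyclic graph and bidirected edges $V_j\leftrightarrow V_k$. A transportability diagram $D$ is such a graph $G$ together with a set $T$ of additional vertices (transportability nodes), each having exactly one incident edge, a directed edge $T_j\to V_j$ with $V_j\in V$. d-separation: a path is blocked by a set $Z$ if it contains a non-collider $M\in Z$ (patterns $I\to M\to J$, $I\leftrightarrow M\to J$, $I\leftarrow M\to J$ and their reversals) or a collider $M$ (patterns $I\to M\leftarrow J$, $I\leftrightarrow M\leftarrow J$, $I\leftrightarrow M\leftrightarrow J$) with $\mathrm{De}(M)\cap Z=\emptyset$, where $\mathrm{De}(M)$ is $M$ together with its descendants; disjoint $X,Y$ are d-separated by $Z$ if every path between $X$ and $Y$ is blocked by $Z$. *)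

(* Defs.v *)
From mathcomp Require Import all_boot.
Set Implicit Arguments. Unset Strict Implicit. Unset Printing Implicit Defensive.

(* A mixed graph on a finite vertex type: directed edges [gdir a b] means
   a -> b, bidirected edges [gbi a b] means a <-> b. *)
Record mgraph (V : finType) := MGraph { gdir : rel V; gbi : rel V }.

Definition dacyclic (V : finType) (e : rel V) : Prop :=
  forall x y, e x y -> ~~ connect e y x.

Definition semi_markovian (V : finType) (g : mgraph V) : Prop :=
  [/\ dacyclic (gdir g), symmetric (gbi g) & irreflexive (gbi g)].

(* kinds of edges traversed along a path from the current vertex a to the next b:
   EF : a -> b,  EB : a <- b,  EBi : a <-> b *)
Inductive ekind := EF | EB | EBi.

Definition edge_of (V : finType) (g : mgraph V) (k : ekind) (a b : V) : bool :=
  match k with EF => gdir g a b | EB => gdir g b a | EBi => gbi g a b end.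

(* a path is a start vertex x together with a list of steps (edge kind, next vertex) *)
Fixpoint valid_steps (V : finType) (g : mgraph V) (x : V) (s : seq (ekind * V)) : bool :=
  match s with
  | [::] => true
  | (k, y) :: s' => edge_of g k x y && valid_steps g y s'
  end.

Definition is_path (V : finType) (g : mgraph V) (x : V) (s : seq (ekind * V)) : bool :=
  valid_steps g x s && uniq (x :: map snd s).

(* arrowhead at the middle vertex on the incoming edge (prev ? m) *)
Definition head_in (k : ekind) : bool := match k with EB => false | _ => true end.
(* arrowhead at the middle vertex on the outgoing edge (m ? next) *)
Definition head_out (k : ekind) : bool := match k with EF => false | _ => true end.

Definition collider (kin kout : ekind) : bool := head_in kin && head_out kout.

Definition De (V : finType) (g : mgraph V) (m : V) : {set V} :=
  [set y | connect (gdir g) m y].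

Definition blocks_at (V : finType) (g : mgraph V) (Z : {set V})
    (kin : ekind) (m : V) (kout : ekind) : bool :=
  if collider kin kout then De g m :&: Z == set0 else m \in Z.

Fixpoint blocked_from (V : finType) (g : mgraph V) (Z : {set V})
    (kin : ekind) (m : V) (s : seq (ekind * V)) : bool :=
  match s with
  | [::] => false
  | (k, y) :: s' => blocks_at g Z kin m k || blocked_from g Z k y s'
  end.

Definition blocked (V : finType) (g : mgraph V) (Z : {set V}) (x : V)
    (s : seq (ekind * V)) : bool :=
  match s with
  | [::] => false
  | (k, y) :: s' => blocked_from g Z k y s'
  end.

Definition dsep (V : finType) (g : mgraph V) (X Y Z : {set V}) : Prop :=
  forall (x : V) (s : seq (ekind * V)),
    x \in X -> last x (map snd s) \in Y -> is_path g x s -> blocked g Z x s.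

Definition transp_diagram (W : finType) (g : mgraph W) (T : {set W}) : Prop :=
  semi_markovian g /\
  forall t, t \in T ->
    exists2 v, v \notin T &
      [/\ gdir g t v,
          forall u, gdir g t u -> u = v,
          forall u, ~~ gdir g u t,
          forall u, ~~ gbi g t u
        & forall u, ~~ gbi g u t].

Definition remove_nodes (W : finType) (g : mgraph W) (T : {set W}) :
    mgraph {x : W | x \notin T} :=
  MGraph (fun a b : {x : W | x \notin T} => gdir g (val a) (val b))
         (fun a b : {x : W | x \notin T} => gbi g (val a) (val b)).

Definition restrict (W : finType) (T : {set W}) (A : {set W}) :
    {set {x : W | x \notin T}} :=
  [set v : {x : W | x \notin T} | val v \in A].

(* Main.v *)
Require Import Defs.
From mathcomp Require Import all_boot.
Set Implicit Arguments. Unset Strict Implicit.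

Definition liftp (W : finType) (T : {set W}) (s : seq (ekind * {x : W | x \notin T})) :
  seq (ekind * W) := map (fun p => (p.1, val p.2)) s.

Lemma valid_lift (W : finType) (D : mgraph W) (T : {set W}) x s :
  valid_steps D (val x) (liftp s) = valid_steps (remove_nodes D T) x s.
Proof.
elim: s x => [|[k y] s IH] x //=. rewrite IH. by case: k.
Qed.

Lemma snd_lift (W : finType) (T : {set W}) (s : seq (ekind * {x : W | x \notin T})) :
  map snd (liftp s) = map val (map snd s).
Proof. by rewrite /liftp -!map_comp. Qed.

Lemma path_lift (W : finType) (D : mgraph W) (T : {set W}) x s :
  is_path D (val x) (liftp s) = is_path (remove_nodes D T) x s.
Proof.
rewrite /is_path valid_lift snd_lift.
have -> : val x :: map val (map snd s) = map val (x :: map snd s) by [].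
by rewrite (map_inj_uniq val_inj).
Qed.

Lemma last_lift (W : finType) (T : {set W}) x (s : seq (ekind * {x : W | x \notin T})) :
  last (val x) (map snd (liftp s)) = val (last x (map snd s)).
Proof. by rewrite snd_lift last_map. Qed.

Lemma noin (W : finType) (D : mgraph W) (T : {set W}) :
  transp_diagram D T -> forall u t, gdir D u t -> t \notin T.
Proof.
move=> [_ H] u t e; apply/negP => /H [v _ [_ _ H3 _ _]].
by move: (H3 u); rewrite e.
Qed.

Lemma conn_lift (W : finType) (D : mgraph W) (T : {set W}) :
  transp_diagram D T -> forall (m : {x : W | x \notin T}) y,
  connect (gdir D) (val m) y ->
  exists2 y', y = val y' & connect (gdir (remove_nodes D T)) m y'.
Proof.
move=> tD m y /connectP [p].
elim: p m => [|z p IH] m /=.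
  by move=> _ ->; exists m.
move=> /andP [e pp] ey.
have zT := noin tD e.
have [y' -> c] := IH (Sub z zT) pp ey.
exists y' => //. apply: connect_trans c. by apply: connect1.
Qed.

Lemma conn_map (W : finType) (D : mgraph W) (T : {set W}) (m y : {x : W | x \notin T}) :
  connect (gdir (remove_nodes D T)) m y -> connect (gdir D) (val m) (val y).
Proof.
move=> /connectP [p].
elim: p m => [|z p IH] m /=.
  by move=> _ ->.
move=> /andP [e pp] ey.
apply: connect_trans (IH z pp ey). exact: connect1.
Qed.

Lemma blocks_lift (W : finType) (D : mgraph W) (T Z T' : {set W}) :
  transp_diagram D T -> T' \subset T -> forall kin (m : {x : W | x \notin T}) kout,
  blocks_at D (Z :|: T') kin (val m) kout = blocks_at (remove_nodes D T) (restrict T Z) kin m kout.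
Proof.
move=> tD sT kin m kout; rewrite /blocks_at.
case: collider.
  apply/idP/idP => /eqP H; apply/eqP; apply/setP => y; rewrite !inE;
    apply/negP => /andP [c zy]; move/setP: H => H.
  - move: (H (val y)); rewrite !inE (conn_map c) /=.
    by rewrite zy.
  - have [y' ey c'] := conn_lift tD c.
    move: (H y'); rewrite !inE c' -ey /=.
    move: zy => /orP [-> //|yT] .
    have : y \in T by apply: (subsetP sT).
    by rewrite ey (negbTE (valP y')).
rewrite !inE.
case: (val m \in Z) => //=.
apply/negP => mT; have := subsetP sT _ mT; by rewrite (negbTE (valP m)).
Qed.

Lemma blocked_from_lift (W : finType) (D : mgraph W) (T Z T' : {set W}) :
  transp_diagram D T -> T' \subset T -> forall s kin (m : {x : W | x \notin T}),
  blocked_from D (Z :|: T') kin (val m) (liftp s) =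
  blocked_from (remove_nodes D T) (restrict T Z) kin m s.
Proof.
move=> tD sT; elim => [|[k y] s IH] kin m //=.
by rewrite IH (blocks_lift _ tD sT).
Qed.

Lemma blocked_lift (W : finType) (D : mgraph W) (T Z T' : {set W}) :
  transp_diagram D T -> T' \subset T -> forall s (m : {x : W | x \notin T}),
  blocked D (Z :|: T') (val m) (liftp s) =
  blocked (remove_nodes D T) (restrict T Z) m s.
Proof.
move=> tD sT [|[k y] s] m //=. exact: blocked_from_lift.
Qed.

Lemma path_avoid (W : finType) (D : mgraph W) (T : {set W}) :
  transp_diagram D T -> forall s x, is_path D x s -> x \notin T ->
  last x (map snd s) \notin T -> all (fun p => p.2 \notin T) s.
Proof.
move=> tD; elim => [|[k y] s IH] x //= /andP [/andP [e vs] u] xT lT.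
have pys : is_path D y s.
  rewrite /is_path; apply/andP; split; first exact: vs.
  by move: u => /= /andP [_ ->].
have yT : y \notin T.
  case: s IH vs u pys lT => [|[k2 w] s] IH vs u pys lT //=.
  apply/negP => yT.
  have [v _ [H1 H2 H3 H4 H5]] := (proj2 tD) y yT.
  have ex : x = v.
    clear -e H2 H3 H5; move: e; case: k => /=.
    - by rewrite (negbTE (H3 x)).
    - exact: H2.
    - by rewrite (negbTE (H5 x)).
  have ew : w = v.
    move: vs => /= /andP [e2 _]; clear -e2 H2 H3 H4; move: e2; case: k2 => /=.
    - exact: H2.
    - by rewrite (negbTE (H3 w)).
    - by rewrite (negbTE (H4 w)).
  move: u => /= /andP [/norP [_ /norP [xw _]] _].
  by rewrite ex ew eqxx in xw.
by rewrite yT /= (IH y pys yT lT).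
Qed.

Lemma all_lift (W : finType) (T : {set W}) (s : seq (ekind * W)) :
  all (fun p => p.2 \notin T) s -> exists s', s = liftp (T:=T) s'.
Proof.
elim: s => [|[k y] s IH] /=; first by exists [::].
move=> /andP [yT /IH [s' ->]].
by exists ((k, Sub y yT) :: s').
Qed.

Theorem lemma1 (W : finType) (D : mgraph W) (T X Y Z : {set W}) :
  transp_diagram D T ->
  [disjoint X & T] -> [disjoint Y & T] -> [disjoint Z & T] ->
  [disjoint X & Y] -> [disjoint X & Z] -> [disjoint Y & Z] ->
  (forall T' : {set W}, T' \subset T -> dsep D X Y (Z :|: T')) <->
  dsep (remove_nodes D T) (restrict T X) (restrict T Y) (restrict T Z).
Proof.
move=> tD dX dY dZ _ _ _; split.
  move=> H x s xX lY p.
  rewrite -(blocked_lift Z tD (sub0set T)).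
  apply: H; first exact: sub0set.
  - by move: xX; rewrite inE.
  - by rewrite last_lift; move: lY; rewrite inE.
  - by rewrite path_lift.
move=> H T' sT x s xX lY p.
have xT : x \notin T by rewrite (disjointFr dX xX).
have lT : last x (map snd s) \notin T by rewrite (disjointFr dY lY).
have [s' es] := all_lift (path_avoid tD p xT lT).
subst s.
have -> : x = val (Sub x xT : {x : W | x \notin T}) by [].
rewrite (blocked_lift Z tD sT).
apply: H.
- by rewrite inE.
- by rewrite inE -last_lift.
- by rewrite -path_lift.
Qed.
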